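(* Let $k$ be an algebraically closed field of characteristic zero, $\mathfrak g$ a nilpotent Lie algebra over $k$ of dimension $n\ge 2$, and $(A,\cdot)$ an LR-structure on $\mathfrak g$ such that the commuting family $\{L(x):x\in A\}$ has a single weight $\alpha$ on $A$, with $\alpha\neq 0$ (i.e., each $L(x)$ has the single eigenvalue $\alpha(L(x))$, and $\alpha$ is not identically zero). Let $e_1,\dots,e_n$ be a basis of $A$ in which all $L(x)$ are upper triangular, normalized so that $\alpha(L(e_n))=1$ and $\alpha(L(e_k))=0$ for $1\le k\le n-1$. Write $L(e_k)=(a^k_{i,j})_{1\le i,j\le n}$. Then $a^k_{n-1,n}=0$ for all $k=1,\dots,n-2$, and the subspace $\mathrm{span}(e_1,\dots,e_{n-2})$ is a two-sided ideal of $A$.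
   Context: An LR-algebra is a vector space $A$ with a bilinear product $\cdot$ satisfying $x\cdot(y\cdot z)=y\cdot(x\cdot z)$ and $(x\cdot y)\cdot z=(x\cdot z)\cdot y$ for all $x,y,z\in A$. An LR-structure on a Lie algebra $\mathfrak g$ is an LR-algebra product on the underlying vector space of $\mathfrak g$ with $x\cdot y-y\cdot x=[x,y]$. $L(x)y=x\cdot y$. (In this setting a basis with the stated normalization always exists.) *)

(* Defs.v *)
From HB Require Import structures.
From mathcomp Require Import all_boot all_order all_algebra all_field.
Set Implicit Arguments. Unset Strict Implicit. Unset Printing Implicit Defensive.
Import GRing.Theory.
Local Open Scope ring_scope.

(* The algebra A is modelled on coordinates w.r.t. the basis e_1..e_n:
   A = 'cV[K]_n, e_i = the i-th standard column vector (0-indexed). *)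
Definition basis_vec (K : fieldType) (n : nat) (i : 'I_n) : 'cV[K]_n :=
  delta_mx i 0.

Definition bilinear_prod (K : fieldType) (n : nat)
    (mul : 'cV[K]_n -> 'cV[K]_n -> 'cV[K]_n) : Prop :=
  (forall (a : K) x y z, mul (a *: x + y) z = a *: mul x z + mul y z) /\
  (forall (a : K) x y z, mul x (a *: y + z) = a *: mul x y + mul x z).

Definition LR_identities (K : fieldType) (n : nat)
    (mul : 'cV[K]_n -> 'cV[K]_n -> 'cV[K]_n) : Prop :=
  (forall x y z, mul x (mul y z) = mul y (mul x z)) /\
  (forall x y z, mul (mul x y) z = mul (mul x z) y).

Definition lie_bracket (K : fieldType) (n : nat)
    (mul : 'cV[K]_n -> 'cV[K]_n -> 'cV[K]_n) (x y : 'cV[K]_n) : 'cV[K]_n :=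
  mul x y - mul y x.

(* Nilpotency of a Lie algebra: some term of the lower central series
   vanishes, i.e. all m-fold iterated brackets [x1,[x2,...,[xm,y]...]] are 0. *)
Definition lie_nilpotent (K : fieldType) (n : nat)
    (br : 'cV[K]_n -> 'cV[K]_n -> 'cV[K]_n) : Prop :=
  exists m : nat, forall (xs : seq 'cV[K]_n) (y : 'cV[K]_n),
    size xs = m -> foldr br y xs = 0.

(* Matrix of the left multiplication L(x) in the basis e: column j holds the
   coordinates of L(x) e_j, so entry (i,j) is a_{i,j}. *)
Definition Lmx (K : fieldType) (n : nat)
    (mul : 'cV[K]_n -> 'cV[K]_n -> 'cV[K]_n) (x : 'cV[K]_n) : 'M[K]_n :=
  \matrix_(i, j) (mul x (basis_vec K j)) i 0.

(* span(e_1,...,e_{n-2}) : vectors whose coordinates n-1 and n vanish. *)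
Definition span_first (K : fieldType) (n : nat) (v : 'cV[K]_n) : Prop :=
  forall i : 'I_n, (n - 2 <= i)%N -> v i 0 = 0.

Definition two_sided_ideal (K : fieldType) (n : nat)
    (mul : 'cV[K]_n -> 'cV[K]_n -> 'cV[K]_n) (I : 'cV[K]_n -> Prop) : Prop :=
  (I 0) /\ (forall (a : K) u v, I u -> I v -> I (a *: u + v)) /\
  (forall x y, I y -> I (mul x y) /\ I (mul y x)).

(* Main.v *)
Require Import Defs.
From HB Require Import structures.
From mathcomp Require Import all_boot all_order all_algebra all_field.
Import GRing.Theory.
Local Open Scope ring_scope.
From Stdlib Require Import Lia.

Lemma eig_diag (K : fieldType) (n : nat) (M : 'M[K]_n) (i : 'I_n) :
  (forall i j : 'I_n, (j < i)%N -> M i j = 0) -> eigenvalue M (M i i).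
Proof.
move=> Hut; rewrite /eigenvalue /eigenspace kermx_eq0 row_free_unit unitmxE.
rewrite -det_tr det_trig; last first.
  by apply/is_trig_mxP => a b ab; rewrite !mxE (Hut b a) // -val_eqE /= (gtn_eqF ab) mulr0n subr0.
by rewrite (bigD1 i) //= !mxE eqxx mulr1n subrr mul0r unitr0.
Qed.

Section Helpers.
Variables (K : fieldType) (n : nat) (mul : 'cV[K]_n -> 'cV[K]_n -> 'cV[K]_n).
Hypothesis Hb : bilinear_prod mul.

Lemma bmul0l z : mul 0 z = 0.
Proof.
case: Hb => Hl _; have := Hl 1 0 0 z; rewrite !scale1r addr0 => H.
by apply/esym/(@addrI _ (mul 0 z)); rewrite addr0 {1}H.
Qed.

Lemma bmul0r z : mul z 0 = 0.
Proof.
case: Hb => _ Hr; have := Hr 1 z 0 0; rewrite !scale1r addr0 => H.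
by apply/esym/(@addrI _ (mul z 0)); rewrite addr0 {1}H.
Qed.

Lemma mul_sumL (c : 'I_n -> K) (v : 'I_n -> 'cV[K]_n) z :
  mul (\sum_i c i *: v i) z = \sum_i c i *: mul (v i) z.
Proof.
apply: (big_rec2 (fun a b => mul a z = b)); first exact: bmul0l.
by move=> i y1 y2 _ <-; case: Hb => Hl _; rewrite Hl.
Qed.

Lemma mul_sumR (c : 'I_n -> K) (v : 'I_n -> 'cV[K]_n) z :
  mul z (\sum_i c i *: v i) = \sum_i c i *: mul z (v i).
Proof.
apply: (big_rec2 (fun a b => mul z a = b)); first exact: bmul0r.
by move=> i y1 y2 _ <-; case: Hb => _ Hr; rewrite Hr.
Qed.

Lemma vec_decomp (v : 'cV[K]_n) : v = \sum_i v i 0 *: basis_vec K i.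
Proof.
by rewrite {1}(matrix_sum_delta v); apply: eq_bigr => i _; rewrite big_ord1.
Qed.

Lemma coordL x y m :
  (mul x y) m 0 = \sum_i \sum_j x i 0 * y j 0 * Lmx mul (basis_vec K i) m j.
Proof.
rewrite {1}(vec_decomp x) mul_sumL summxE; apply: eq_bigr => i _.
rewrite mxE {1}(vec_decomp y) mul_sumR summxE mulr_sumr; apply: eq_bigr => j _.
by rewrite mxE !mxE mulrA.
Qed.
End Helpers.
Lemma ar (n m j : nat) : (2 <= n)%N -> (n - 2 <= m)%N -> (m < j)%N -> (j < n)%N -> m = (n-2)%N /\ j = n.-1.
Proof. move=> /leP h1 /leP h2 /leP h3 /leP h4. rewrite -subn1. rewrite -!minusE in h2 *. split; lia. Qed.
Lemma ar2 (n : nat) : (2 <= n)%N -> (n.-1 < n - 2)%N -> False.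
Proof. move=> /leP h1 /leP h2. rewrite -subn1 -!minusE in h2. lia. Qed.
Lemma ar3 (n : nat) : (2 <= n)%N -> (n - 2 < n)%N.
Proof. move=> /leP h1; apply/leP. rewrite -!minusE. lia. Qed.

Theorem lemma2p3 (K : closedFieldType) (n : nat)
    (mul : 'cV[K]_n -> 'cV[K]_n -> 'cV[K]_n) (alpha : 'cV[K]_n -> K) :
  [pchar K] =i pred0 ->
  (2 <= n)%N ->
  bilinear_prod mul ->
  LR_identities mul ->
  lie_nilpotent (lie_bracket mul) ->
  (* single weight alpha: each L(x) has alpha(L(x)) as its only eigenvalue *)
  (forall x (a : K), eigenvalue (Lmx mul x) a = (a == alpha x)) ->
  (exists x, alpha x != 0) ->
  (* all L(x) upper triangular in the basis e *)
  (forall x (i j : 'I_n), (j < i)%N -> Lmx mul x i j = 0) ->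
  (* normalization: alpha(L(e_n)) = 1, alpha(L(e_k)) = 0 for k <= n-1 *)
  (forall k : 'I_n, alpha (basis_vec K k) = if (k == n.-1 :> nat) then 1 else 0) ->
  (forall (k i j : 'I_n), (k < n - 2)%N -> (i : nat) = (n - 2)%N ->
      (j : nat) = n.-1 -> Lmx mul (basis_vec K k) i j = 0)
  /\ two_sided_ideal mul (@span_first K n).
Proof.
move=> _ Hn2 Hb [LR1 LR2] _ Heig _ Hut Hal.
have Hdiag x (i : 'I_n) : Lmx mul x i i = alpha x.
  by apply/eqP; rewrite -Heig; apply: eig_diag; apply: Hut.
have hN : (n.-1 < n)%N by rewrite ltn_predL; apply: leq_trans Hn2.
have hM : (n - 2 < n)%N by apply: ar3.
pose N := Ordinal hN; pose M := Ordinal hM.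
have LmxE x (i j : 'I_n) : Lmx mul x i j = (mul x (basis_vec K j)) i 0 by rewrite mxE.
have key : forall m (k : 'I_n), (k < m)%N -> (k < n - 2)%N ->
    Lmx mul (basis_vec K k) M N = 0.
  elim=> [//|m IH] k; rewrite ltnS leq_eqVlt => /orP[/eqP ekm|]; last exact: IH.
  move=> hk.
  have H0 : Lmx mul (mul (basis_vec K N) (basis_vec K N)) M k = 0 by apply: Hut.
  rewrite LmxE -LR2 in H0; move: H0.
  rewrite {1}(@vec_decomp _ _ (mul (basis_vec K N) (basis_vec K k))).
  rewrite mul_sumL // summxE (bigD1 k) //= big1 ?addr0.
    by rewrite mxE -!LmxE Hdiag Hal /= eqxx mul1r => ->.
  move=> i nik; rewrite mxE -LmxE -LmxE.
  case: (ltngtP i k) => hik.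
  - by rewrite (IH i) ?mulr0 ?(ltn_trans hik hk) -?ekm.
  - by rewrite (Hut _ i k hik) mul0r.
  - by move/val_inj: hik nik => ->; rewrite eqxx.
have keyk (k : 'I_n) : (k < n - 2)%N -> Lmx mul (basis_vec K k) M N = 0.
  by move=> hk; apply: (key k.+1).
split.
  move=> k i j hk hi hj.
  have -> : i = M by apply: val_inj.
  have -> : j = N by apply: val_inj.
  exact: keyk.
split; first by move=> i _; rewrite mxE.
split; first by move=> a u v Hu Hv i hi; rewrite !mxE Hu // Hv // mulr0 addr0.
move=> x y Hy; split => m hm; rewrite coordL //; apply: big1 => i _;
  apply: big1 => j _.
- case: (leqP (n - 2) j) => hj; first by rewrite (Hy j hj) mulr0 mul0r.
  by rewrite Hut ?mulr0 //; apply: leq_trans hm.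
- case: (leqP (n - 2) i) => hi; first by rewrite (Hy i hi) !mul0r.
  case: (ltngtP j m) => hjm.
  + by rewrite Hut ?mulr0.
  + have [e1 e2] := ar _ _ _ Hn2 hm hjm (ltn_ord j).
    have -> : m = M by apply: val_inj.
    have -> : j = N by apply: val_inj.
    by rewrite keyk ?mulr0.
  + have ejm : j = m := val_inj hjm.
    rewrite ejm Hdiag Hal.
    have -> : (i == n.-1 :> nat) = false.
      apply/negbTE; apply/eqP => e; move: hi; rewrite e.
      exact: (ar2 _ Hn2).
    by rewrite mulr0.
Qed.
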